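(* Let $R\subset S$ be an $M$-crucial ring extension such that the natural map $R(X)\otimes_RS\to S(X)$ is an isomorphism (for example, if $R\subset S$ is integral or a flat epimorphism). Then $R(X)\subset S(X)$ is $MR(X)$-crucial.
   Context: Rings are commutative and unital. For a ring $A$, its Nagata ring $A(X)$ is the localization of the polynomial ring $A[X]$ at the multiplicative set of polynomials whose content (ideal generated by the coefficients) is $A$. A ring extension $A\subset B$ is $N$-crucial if $\mathrm{Supp}_A(B/A)=\{P\in\mathrm{Spec}(A)\mid A_P\neq B_P\}=\{N\}$ (then $N$ is maximal). *)

(* Defs.v *)
From HB Require Import structures.
From mathcomp Require Import all_boot all_order all_algebra.
Set Implicit Arguments. Unset Strict Implicit. Unset Printing Implicit Defensive.
Import GRing.Theory.
Local Open Scope ring_scope.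

Definition is_ideal (A : comNzRingType) (I : A -> Prop) : Prop :=
  [/\ I 0, (forall x y, I x -> I y -> I (x + y)) & (forall a x, I x -> I (a * x))].

Definition is_prime_ideal (A : comNzRingType) (P : A -> Prop) : Prop :=
  [/\ is_ideal P, ~ P 1 & (forall x y, P (x * y) -> P x \/ P y)].

Definition same_ideal (A : comNzRingType) (P Q : A -> Prop) : Prop :=
  forall x, P x <-> Q x.

Definition ext_ideal (A B : comNzRingType) (f : A -> B) (I : A -> Prop) (y : B) : Prop :=
  forall J : B -> Prop, is_ideal J -> (forall x, I x -> J (f x)) -> J y.

(* For a ring extension f : A -> B (f injective), P is in Supp_A(B/A), i.e.
   (B/A)_P <> 0, i.e. some b in B has no s in A \ P with s b in f(A). *)
Definition in_supp (A B : comNzRingType) (f : A -> B) (P : A -> Prop) : Prop :=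
  exists b : B, forall s : A, ~ P s -> ~ (exists a : A, f a = f s * b).

Definition crucial (A B : comNzRingType) (f : A -> B) (N : A -> Prop) : Prop :=
  [/\ injective f, is_prime_ideal N &
      forall P, is_prime_ideal P -> (in_supp f P <-> same_ideal P N)].

Definition unit_content (A : comNzRingType) (p : {poly A}) : Prop :=
  exists q : {poly A}, \sum_(i < size p) q`_i * p`_i = 1.

Definition is_localization (A B : comNzRingType) (j : {rmorphism A -> B})
  (Sig : A -> Prop) : Prop :=
  [/\ (forall s, Sig s -> exists u, j s * u = 1),
      (forall b, exists a s, Sig s /\ b * j s = j a) &
      (forall a, j a = 0 -> exists s, Sig s /\ s * a = 0)].

(* Nagata ring: j : {poly A} -> AX exhibits AX as A(X). *)
Definition is_nagata (A AX : comNzRingType) (j : {rmorphism {poly A} -> AX}) : Prop :=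
  is_localization j (@unit_content A).

(* The commutative square  f1 : A -> B, f2 : A -> C, g1 : B -> D, g2 : C -> D
   is a pushout of commutative rings, i.e. the natural map B (x)_A C -> D
   is an isomorphism. *)
Definition is_pushout (A B C D : comNzRingType) (f1 : {rmorphism A -> B})
  (f2 : {rmorphism A -> C}) (g1 : {rmorphism B -> D}) (g2 : {rmorphism C -> D}) : Prop :=
  (forall a, g1 (f1 a) = g2 (f2 a)) /\
  forall (T : comNzRingType) (h1 : {rmorphism B -> T}) (h2 : {rmorphism C -> T}),
    (forall a, h1 (f1 a) = h2 (f2 a)) ->
    (exists h : {rmorphism D -> T}, (forall b, h (g1 b) = h1 b) /\ (forall c, h (g2 c) = h2 c)) /\
    (forall h h' : {rmorphism D -> T},
        (forall b, h (g1 b) = h1 b) -> (forall c, h (g2 c) = h2 c) ->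
        (forall b, h' (g1 b) = h1 b) -> (forall c, h' (g2 c) = h2 c) ->
        forall d, h d = h' d).

(* Main.v *)
Require Import Defs.
From HB Require Import structures.
From mathcomp Require Import all_boot all_order all_algebra.
From mathcomp Require Import boolp classical_sets zify ring.
Set Implicit Arguments. Unset Strict Implicit. Unset Printing Implicit Defensive.
Import GRing.Theory.
Local Open Scope ring_scope.

Section Ideals.
Variable A : comNzRingType.
Implicit Types I : A -> Prop.

Lemma ideal0 I : is_ideal I -> I 0. Proof. by case. Qed.
Lemma idealD I x y : is_ideal I -> I x -> I y -> I (x + y). Proof. by case=> _ h _; apply: h. Qed.
Lemma idealMl I a x : is_ideal I -> I x -> I (a * x). Proof. by case=> _ _ h; apply: h. Qed.
Lemma idealMr I a x : is_ideal I -> I x -> I (x * a). Proof. by move=> hI hx; rewrite mulrC; apply: idealMl. Qed.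
Lemma idealN I x : is_ideal I -> I x -> I (- x).
Proof. by move=> hI hx; rewrite -mulN1r; apply: idealMl. Qed.
Lemma idealB I x y : is_ideal I -> I x -> I y -> I (x - y).
Proof. by move=> hI hx hy; apply: idealD => //; apply: idealN. Qed.
Lemma ideal_sum I (T : Type) (r : seq T) (P : pred T) (F : T -> A) :
  is_ideal I -> (forall k, P k -> I (F k)) -> I (\sum_(k <- r | P k) F k).
Proof.
move=> hI hF; apply: (big_ind I); [exact: ideal0 | |exact: hF].
by move=> x y; apply: idealD.
Qed.
End Ideals.

Lemma ex_least (P : nat -> Prop) : (exists n, P n) -> exists n, P n /\ forall m, (m < n)%N -> ~ P m.
Proof.
move=> hex.
have hb : exists n, `[< P n >] by case: hex => n hn; exists n; apply/asboolP.
case: (ex_minnP hb) => m /asboolP Pm hmin; exists m; split => // k hk Pk.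
have := hmin k (introT (asboolP _) Pk); rewrite leqNgt hk //.
Qed.

Section PolyM.
Variable A : comNzRingType.
Variable M : A -> Prop.

Definition polyM (p : {poly A}) := forall k, M p`_k.

Lemma polyM_ideal : is_ideal M -> is_ideal polyM.
Proof.
move=> hM; split.
- by move=> k; rewrite coef0; apply: ideal0.
- by move=> x y hx hy k; rewrite coefD; apply: idealD.
- move=> a x hx k; rewrite coefM; apply: ideal_sum => // j _.
  exact: idealMl.
Qed.

Lemma polyMC m : is_ideal M -> M m -> polyM m%:P.
Proof. by move=> hM hm k; rewrite coefC; case: eqP => _ //; apply: ideal0. Qed.

Lemma uc_notM u : is_ideal M -> ~ M 1 -> unit_content u -> ~ polyM u.
Proof.
move=> hM h1 [q hq] hu; apply: h1; rewrite -hq.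
by apply: ideal_sum => // k _; apply: idealMl.
Qed.

Lemma polyM_prime : is_prime_ideal M -> is_prime_ideal polyM.
Proof.
move=> [hM h1 hp]; split.
- exact: polyM_ideal.
- by move=> /(_ 0%N); rewrite coef1.
move=> p q hpq.
case: (EM (polyM p)) => [|np]; [by left|].
case: (EM (polyM q)) => [|nq]; [by right|].
exfalso.
have [i0 [hi0 mi0]] : exists i0, ~ M p`_i0 /\ forall m, (m < i0)%N -> M p`_m.
  have [k hk] : exists k, ~ M p`_k by apply: contrapT => hn; apply: np => k; apply: contrapT => hk; apply: hn; exists k.
  have [n [hn hmin]] := ex_least (ex_intro (fun k => ~ M p`_k) k hk).
  by exists n; split => // m hm; apply: contrapT; apply: hmin.
have [j0 [hj0 mj0]] : exists j0, ~ M q`_j0 /\ forall m, (m < j0)%N -> M q`_m.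
  have [k hk] : exists k, ~ M q`_k by apply: contrapT => hn; apply: nq => k; apply: contrapT => hk; apply: hn; exists k.
  have [n [hn hmin]] := ex_least (ex_intro (fun k => ~ M q`_k) k hk).
  by exists n; split => // m hm; apply: contrapT; apply: hmin.
have := hpq (i0 + j0)%N; rewrite coefM.
have hi : (i0 < (i0 + j0).+1)%N by rewrite ltnS leq_addr.
rewrite (bigD1 (Ordinal hi)) //= addKn => hs.
have hrest : M (\sum_(j < (i0 + j0).+1 | j != Ordinal hi) p`_j * q`_(i0 + j0 - j)).
  apply: ideal_sum => // j hj.
  have : (nat_of_ord j != i0) by apply: contra hj => /eqP e; apply/eqP/val_inj.
  rewrite neq_ltn => /orP[jl|jg]; first by apply: idealMr => //; apply: mi0.
  apply: idealMl => //; apply: mj0.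
  have := ltn_ord j; rewrite ltnS => jle.
  by rewrite ltn_subLR // -?ltn_subLR ?addnC ?ltn_add2r //; lia.
have := idealB hM hs hrest; rewrite addrK => /hp [] //.
Qed.
End PolyM.

Lemma mccoy (A : comNzRingType) (t g : {poly A}) :
  unit_content t -> t * g = 0 -> g = 0.
Proof.
case=> q hq.
have key : forall g : {poly A}, (forall k, t`_k *: g = 0) -> g = 0.
  move=> h hk; rewrite -[h]scale1r -hq scaler_suml big1 // => k _.
  by rewrite -scalerA hk scaler0.
elim: (size g).+1 {-2}g (ltnSn (size g)) => {g} [//|n IH] g hg htg.
apply: key.
suff hC : forall d k, (size t - d <= k)%N -> t`_k *: g = 0.
  by move=> k; apply: (hC (size t)); rewrite subnn.
elim=> [|d IHd] k.
  rewrite subn0 => hk; have -> : t`_k = 0 by apply/leq_sizeP: k hk.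
  by rewrite scale0r.
rewrite leq_eqVlt => /orP[/eqP ek|]; last first.
  by move=> hk; apply: IHd; lia.
have hgt : forall j, (k < j)%N -> t`_j *: g = 0.
  by move=> j hj; apply: IHd; lia.
case: (eqVneq g 0) => [->|gnz]; first by rewrite scaler0.
move/leq_sizeP: (leqnn (size g)) => gz.
have sgp : (0 < size g)%N by rewrite size_poly_gt0.
have hl : t`_k * lead_coef g = 0.
  have e := congr1 (fun p : {poly A} => p`_(k + (size g).-1)) htg.
  have hk : (k < (k + (size g).-1).+1)%N by lia.
  rewrite /= coef0 coefM (bigD1 (Ordinal hk)) //= in e.
  have hrest : \sum_(j < (k + (size g).-1).+1 | j != Ordinal hk) t`_j * g`_(k + (size g).-1 - j) = 0.
    apply: big1 => j hj.
    have : (nat_of_ord j != k) by apply: contra hj => /eqP e'; apply/eqP/val_inj.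
    rewrite neq_ltn => /orP[jl|jg].
      by rewrite gz ?mulr0 //; lia.
    by rewrite -coefZ hgt // coef0.
  by rewrite hrest addr0 addKn in e.
apply: IH.
  have hs : (size (t`_k *: g) <= (size g).-1)%N.
    apply/leq_sizeP => j hj; rewrite coefZ.
    move: hj; rewrite leq_eqVlt => /orP[/eqP <-|hj]; first by rewrite -lead_coefE.
    by rewrite gz ?mulr0 //; lia.
  lia.
by rewrite -scalerAr htg scaler0.
Qed.

Section Nag.
Variables (A AX : comNzRingType) (j : {rmorphism {poly A} -> AX}).
Hypothesis hj : is_nagata j.

Lemma nag_unit s : unit_content s -> exists u, j s * u = 1.
Proof. by case: hj => h _ _; apply: h. Qed.

Lemma nag_rep x : exists a s, unit_content s /\ x * j s = j a.
Proof. by case: hj => _ h _; have [a [s [h1 h2]]] := h x; exists a, s. Qed.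

Lemma nag_inj : injective j.
Proof.
move=> a b e; apply/eqP; rewrite -subr_eq0; apply/eqP.
case: hj => _ _ /(_ (a - b)); rewrite rmorphB e subrr => /(_ erefl) [s [hs hsab]].
exact: mccoy hs hsab.
Qed.

Lemma nag_cancel x v u : j v * u = 1 -> x = x * j v * u.
Proof. by move=> h; rewrite -mulrA h mulr1. Qed.

End Nag.

Section MX.
Variables (R RX : comNzRingType) (jR : {rmorphism {poly R} -> RX}) (M : R -> Prop).
Hypothesis hj : is_nagata jR.
Hypothesis hM : is_prime_ideal M.

Definition MXd (x : RX) := exists p v, [/\ polyM M p, exists u, jR v * u = 1 & x * jR v = jR p].

Let hMi : is_ideal M. Proof. by case: hM. Qed.

Lemma unit_notM v : (exists u, jR v * u = 1) -> ~ polyM M v.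
Proof.
case=> u hu hv.
have [b [s [hs e]]] := nag_rep hj u.
have : v * b = s.
  apply: (nag_inj hj); rewrite rmorphM -e mulrA hu mul1r //.
move=> evb; apply: (uc_notM hMi _ hs); first by case: hM.
by rewrite -evb mulrC; apply: (idealMl _ (polyM_ideal hMi)).
Qed.

Lemma jR_ideal (J : RX -> Prop) p : is_ideal J -> (forall m, M m -> J (jR m%:P)) -> polyM M p -> J (jR p).
Proof.
move=> hJ hJM hp; rewrite -[p]coefK poly_def rmorph_sum; apply: ideal_sum => // k _.
by rewrite -mul_polyC rmorphM; apply: (idealMr _ hJ); apply: hJM.
Qed.

Lemma MXd_ideal : is_ideal MXd.
Proof.
split.
- exists 0, 1; split; first exact: ideal0 (polyM_ideal hMi).
  + by exists 1; rewrite rmorph1 mul1r.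
  + by rewrite mul0r rmorph0.
- move=> x y [p [v [hp [u hu] hx]]] [p' [v' [hp' [u' hu'] hy]]].
  exists (p * v' + p' * v), (v * v'); split.
  + have hPI := polyM_ideal hMi.
    by apply: (idealD hPI); apply: (idealMr _ hPI).
  + by exists (u * u'); rewrite rmorphM; transitivity ((jR v * u) * (jR v' * u')); [ring|rewrite hu hu' mulr1].
  + rewrite rmorphD !rmorphM -hx -hy; ring.
- move=> a x [p [v [hp [u hu] hx]]].
  have [c [s [hs e]]] := nag_rep hj a.
  have [us hus] := nag_unit hj hs.
  exists (c * p), (s * v); split.
  + exact: (idealMl _ (polyM_ideal hMi)).
  + by exists (us * u); rewrite rmorphM; transitivity ((jR s * us) * (jR v * u)); [ring|rewrite hu hus mulr1].
  + by rewrite !rmorphM -hx -e; ring.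
Qed.

Lemma ext_MXd x : ext_ideal (jR \o polyC) M x <-> MXd x.
Proof.
split.
- move=> h; apply: h; first exact: MXd_ideal.
  move=> m hm; exists m%:P, 1; split; first exact: polyMC.
  + by exists 1; rewrite rmorph1 mul1r.
  + by rewrite rmorph1 mulr1.
- move=> [p [v [hp [u hu] hx]]] J hJ hJM.
  rewrite (nag_cancel x hu) hx; apply: idealMr => //.
  by apply: jR_ideal.
Qed.

Lemma MXd_poly a : MXd (jR a) -> polyM M a.
Proof.
move=> [p [v [hp hu hx]]].
have e : a * v = p by apply: (nag_inj hj); rewrite rmorphM.
case: (polyM_prime hM) => _ _ hpr.
by have := hp; rewrite -e => /hpr [] // /(unit_notM hu).
Qed.

Lemma MXd_prime : is_prime_ideal MXd.
Proof.
split; first exact: MXd_ideal.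
- move=> [p [v [hp hu hx]]]; apply: (unit_notM hu).
  by have -> : v = p by apply: (nag_inj hj); rewrite -hx mul1r.
- move=> x y [p [v [hp hu hx]]].
  have [a [s [hs ex]]] := nag_rep hj x.
  have [a' [s' [hs' ey]]] := nag_rep hj y.
  have e : a * a' * v = p * s * s'.
    apply: (nag_inj hj); rewrite !rmorphM -ex -ey -hx; ring.
  have : polyM M (a * a' * v) by rewrite e; apply: (idealMr _ (polyM_ideal hMi)); apply: (idealMr _ (polyM_ideal hMi)).
  case: (polyM_prime hM) => _ _ hpr.
  case/hpr => [|/(unit_notM hu)] //.
  have [u hu'] := nag_unit hj hs; have [u' hu''] := nag_unit hj hs'.
  case/hpr => h; [left|right].
  + by exists a, s; split => //; exists u.
  + by exists a', s'; split => //; exists u'.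
Qed.
End MX.

Lemma krull (A : comNzRingType) (I : A -> Prop) :
  is_ideal I -> ~ I 1 -> exists P, is_prime_ideal P /\ forall x, I x -> P x.
Proof.
move=> hI nI1.
pose PP := fun J : set A => J = set0 \/ [/\ is_ideal J, (forall x, I x -> J x) & ~ J 1].
have [] := @Zorn_bigcup A PP.
  move=> F FP Ftot.
  case: (EM (exists X, F X /\ X <> set0)) => [[X0 [FX0 X0n]]|hall]; last first.
    left; apply/seteqP; split => x //= [X FX Xx].
    apply: hall; exists X; split => // e; by rewrite e in Xx.
  have Fid : forall X, F X -> forall x, X x -> [/\ is_ideal X, (forall x, I x -> X x) & ~ X 1].
    move=> X FX x Xx; case: (FP X FX) => // e; by rewrite e in Xx.
  have hX0 : [/\ is_ideal X0, (forall x, I x -> X0 x) & ~ X0 1].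
    case: (FP X0 FX0) => // .
  case: hX0 => hX0i hX0I hX01.
  right; split.
  - split.
    + by exists X0 => //; apply: ideal0.
    + move=> x y [X FX Xx] [Y FY Yy].
      case: (Ftot X Y FX FY) => hXY.
      * exists Y => //; have [hY _ _] := Fid Y FY y Yy; apply: idealD => //; exact: hXY.
      * exists X => //; have [hX _ _] := Fid X FX x Xx; apply: idealD => //; exact: hXY.
    + move=> a x [X FX Xx]; exists X => //; have [hX _ _] := Fid X FX x Xx.
      exact: idealMl.
  - by move=> x Ix; exists X0 => //; apply: hX0I.
  - by move=> [X FX X1]; have [_ _] := Fid X FX 1 X1.
move=> P0 [PP0 P0max].
have hP0 : [/\ is_ideal P0, (forall x, I x -> P0 x) & ~ P0 1].
  case: PP0 => // e; exfalso; apply: (P0max I); last first.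
    by right; split => //.
  rewrite e; split => // /(_ 0) h; apply: h; exact: ideal0.
case: hP0 => hP0i hP0I hP01.
exists P0; split => //; split => // a b hab.
apply: contrapT => /not_orP [na nb].
have ext : forall z, ~ P0 z -> exists c y, P0 y /\ 1 = c * z + y.
  move=> z nz; pose B := fun r => exists c y, P0 y /\ r = c * z + y.
  have hB : is_ideal B.
    split.
    - by exists 0, 0; split; [exact: ideal0|rewrite mul0r addr0].
    - move=> u v [c [y [hy ->]]] [c' [y' [hy' ->]]]; exists (c + c'), (y + y'); split.
        exact: idealD.
      by ring.
    - move=> r u [c [y [hy ->]]]; exists (r * c), (r * y); split; first exact: idealMl.
      by ring.
  have hsub : forall u, P0 u -> B u by move=> u hu; exists 0, u; split => //; rewrite mul0r add0r.
  apply: contrapT => nB1.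
  apply: (P0max B).
    split; first exact: hsub.
    move=> /(_ z) h; apply: nz; apply: h; exists 1, 0; split; [exact: ideal0|by rewrite mul1r addr0].
  right; split => //.
    by move=> u /hP0I; apply: hsub.
have [c [y [hy e1]]] := ext a na.
have [c' [y' [hy' e2]]] := ext b nb.
apply: hP01.
have -> : 1 = (c * c') * (a * b) + (c * a * y' + (c' * b * y + y * y')) :> A.
  rewrite -[LHS]mulr1 [X in X * _]e1 [X in _ * X]e2; ring.
apply: idealD => //; first exact: idealMl.
apply: idealD => //; first exact: idealMl.
by apply: idealD => //; apply: idealMl.
Qed.

Lemma crucial_max (R S : comNzRingType) (i : R -> S) (M : R -> Prop) :
  crucial i M -> forall x, ~ M x -> exists c, M (c * x - 1).
Proof.
move=> [hinj hM hsupp] x nx; apply: contrapT => hno.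
have hMi : is_ideal M by case: hM.
pose I := fun r => exists c m, M m /\ r = c * x + m.
have hI : is_ideal I.
  split.
  - by exists 0, 0; split; [exact: ideal0|rewrite mul0r addr0].
  - move=> u v [c [y [hy ->]]] [c' [y' [hy' ->]]]; exists (c + c'), (y + y'); split.
      exact: idealD.
    by ring.
  - move=> r u [c [y [hy ->]]]; exists (r * c), (r * y); split; first exact: idealMl.
    by ring.
have nI1 : ~ I 1.
  move=> [c [m [hm e]]]; apply: hno; exists c.
  have -> : c * x - 1 = - m by rewrite e; ring.
  exact: idealN.
have [P [hP hIP]] := krull hI nI1.
have MP : forall m, M m -> P m by move=> m hm; apply: hIP; exists 0, m; split => //; rewrite mul0r add0r.
have [b hb] : in_supp i M by apply/(hsupp M hM).
have : same_ideal P M.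
  apply/(hsupp P hP); exists b => s ns; apply: hb => hs; apply: ns; exact: MP.
move=> /(_ x) [h _]; apply: nx; apply: h; apply: hIP; exists 1, 0; split; [exact: ideal0|by rewrite mul1r addr0].
Qed.

Section SubE.
Variables (R S : comNzRingType) (i : {rmorphism R -> S}) (RX SX : comNzRingType).
Variables (jR : {rmorphism {poly R} -> RX}) (jS : {rmorphism {poly S} -> SX}).
Variables (phi : {rmorphism RX -> SX}) (Q : RX -> Prop).
Hypothesis Qp : is_prime_ideal Q.
Hypothesis hcomp : forall p, phi (jR p) = jS (map_poly i p).
Hypothesis H : forall b : S, exists s a : R, ~ Q (jR s%:P) /\ i a = i s * b.

Definition Eprop (y : SX) := exists s, ~ Q s /\ exists a, phi a = phi s * y.
Definition Epred : {pred SX} := fun y => `[< Eprop y >].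

Lemma Q1 : ~ Q 1. Proof. by case: Qp. Qed.
Lemma Qmul s s' : ~ Q s -> ~ Q s' -> ~ Q (s * s').
Proof. by case: Qp => _ _ hp ns ns' /hp []. Qed.

Lemma Epred_closed : subring_closed Epred.
Proof.
split.
- by apply/asboolP; exists 1; split; [exact: Q1|exists 1; rewrite rmorph1 mulr1].
- move=> x y /asboolP [s [ns [a ha]]] /asboolP [s' [ns' [a' ha']]]; apply/asboolP.
  exists (s * s'); split; first exact: Qmul.
  exists (s' * a - s * a'); rewrite rmorphB !rmorphM ha ha'; ring.
- move=> x y /asboolP [s [ns [a ha]]] /asboolP [s' [ns' [a' ha']]]; apply/asboolP.
  exists (s * s'); split; first exact: Qmul.
  exists (a * a'); rewrite !rmorphM ha ha'; ring.
Qed.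

HB.instance Definition _ := GRing.isSubringClosed.Build SX Epred Epred_closed.
Record Esub := ESub { eval :> SX; _ : eval \in Epred }.
HB.instance Definition _ := [isSub for eval].
HB.instance Definition _ := [Choice of Esub by <:].
HB.instance Definition _ := [SubChoice_isSubComNzRing of Esub by <:].

Lemma h1_mem x : phi x \in Epred.
Proof. by apply/asboolP; exists 1; split; [exact: Q1|exists x; rewrite rmorph1 mul1r]. Qed.

Definition h1f (x : RX) : Esub := ESub (h1_mem x).

Lemma h1f_zmod : zmod_morphism h1f.
Proof. by move=> x y; apply: val_inj; rewrite /= rmorphB. Qed.
Lemma h1f_monoid : monoid_morphism h1f.
Proof. by split; [apply: val_inj; rewrite /= rmorph1 | move=> x y; apply: val_inj; rewrite /= rmorphM]. Qed.
HB.instance Definition _ := GRing.isZmodMorphism.Build RX Esub h1f h1f_zmod.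
HB.instance Definition _ := GRing.isMonoidMorphism.Build RX Esub h1f h1f_monoid.

Lemma h2_mem b : jS b%:P \in Epred.
Proof.
apply/asboolP; have [s [a [ns e]]] := H b.
exists (jR s%:P); split => //; exists (jR a%:P).
by rewrite !hcomp !map_polyC /= e polyCM rmorphM.
Qed.

Definition h2f (b : S) : Esub := ESub (h2_mem b).
Lemma h2f_zmod : zmod_morphism h2f.
Proof. by move=> x y; apply: val_inj; rewrite /= polyCB rmorphB. Qed.
Lemma h2f_monoid : monoid_morphism h2f.
Proof. by split; [apply: val_inj; rewrite /= rmorph1 | move=> x y; apply: val_inj; rewrite /= polyCM rmorphM]. Qed.
HB.instance Definition _ := GRing.isZmodMorphism.Build S Esub h2f h2f_zmod.
HB.instance Definition _ := GRing.isMonoidMorphism.Build S Esub h2f h2f_monoid.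

Lemma Esub_all :
  is_pushout (jR \o polyC) i phi (jS \o polyC) -> forall y, Eprop y.
Proof.
move=> [hsq hpo].
have hc : forall a, h1f ((jR \o polyC) a) = h2f (i a).
  by move=> a; apply: val_inj; rewrite /= hsq.
have [[h [hh1 hh2]] _] := hpo _ h1f h2f hc.
have [_ huniq] := hpo _ phi (jS \o polyC) hsq.
move=> y.
have e : (val \o h) y = idfun y.
  apply: (huniq (val \o h) idfun) => //= b.
  + by rewrite hh1.
  + by rewrite hh2.
rewrite /= in e; rewrite -e; case: (h y) => z hz /=; exact/asboolP.
Qed.
End SubE.

Unset Implicit Arguments.

Theorem lemma6p11
  (R S : comNzRingType) (i : {rmorphism R -> S}) (M : R -> Prop)
  (RX SX : comNzRingType)
  (jR : {rmorphism {poly R} -> RX}) (jS : {rmorphism {poly S} -> SX})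
  (phi : {rmorphism RX -> SX}) :
  crucial i M ->
  is_nagata jR -> is_nagata jS ->
  (forall p : {poly R}, phi (jR p) = jS (map_poly i p)) ->
  is_pushout (jR \o polyC) i phi (jS \o polyC) ->
  crucial phi (ext_ideal (jR \o polyC) M).
Proof.
move=> hcr hnR hnS hcomp hpo.
have [iinj hM hsupp] := hcr.
have hMi : is_ideal M by case: hM.
have -> : ext_ideal (jR \o polyC) M = MXd jR M.
  by apply: funext => x; apply: propext; exact: ext_MXd.
split.
- move=> x y e.
  have h0 : phi (x - y) = 0 by rewrite rmorphB e subrr.
  have [a [s [hs ha]]] := nag_rep hnR (x - y).
  have [u hu] := nag_unit hnR hs.
  have ma : map_poly i a = 0.
    by apply: (nag_inj hnS); rewrite rmorph0 -hcomp -ha rmorphM h0 mul0r.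
  have a0 : a = 0 by apply/polyP => k; apply: iinj; rewrite coef0 rmorph0 -coef_map ma coef0.
  apply/eqP; rewrite -subr_eq0; apply/eqP.
  by rewrite (nag_cancel (x - y) hu) ha a0 rmorph0 !mul0r.
- exact: MXd_prime.
move=> Q hQ; split.
- move=> hsupQ.
  pose P := fun r => Q (jR r%:P).
  have hP : is_prime_ideal P.
    case: hQ => hQi hQ1 hQp; split.
    + split.
      * by rewrite /P rmorph0; apply: ideal0.
      * by move=> x y hx hy; rewrite /P polyCD rmorphD; apply: idealD.
      * by move=> a x hx; rewrite /P polyCM rmorphM; apply: idealMl.
    + by rewrite /P rmorph1.
    + by move=> x y; rewrite /P polyCM rmorphM => /hQp.
  have hsP : in_supp i P.
    apply: contrapT => nsP.
    have H : forall b : S, exists s a : R, ~ Q (jR s%:P) /\ i a = i s * b.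
      move=> b; apply: contrapT => nb; apply: nsP; exists b => s ns [a ha].
      by apply: nb; exists s, a.
    have hall := Esub_all hQ hcomp H hpo.
    case: hsupQ => y hy; have [s [ns [a ha]]] := hall y.
    by apply: (hy s ns); exists a.
  have ePM : same_ideal P M by apply/(hsupp P hP).
  move=> x; split.
  + move=> Qx.
    have [a [s [hs ha]]] := nag_rep hnR x.
    have [u hu] := nag_unit hnR hs.
    exists a, s; split => //; last by exists u.
    move=> k; apply: contrapT => nk.
    have [c hc] := crucial_max hcr nk.
    pose m := c * a`_k - 1.
    pose a' := c%:P * a - m%:P * 'X^k.
    have hQa' : Q (jR a').
      case: hQ => hQi _ _.
      rewrite /a' rmorphB !rmorphM; apply: idealB => //.
        by apply: idealMl => //; rewrite -ha; apply: idealMr.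
      by apply: idealMr => //; apply/(ePM m).
    have ca' : a'`_k = 1 by rewrite /a' coefB coefCM coefMXn ltnn subnn coefC eqxx /m; ring.
    have uca' : unit_content a'.
      exists 'X^k.
      have hk : (k < size a')%N.
        by rewrite ltnNge; apply/negP => /leq_sizeP /(_ k (leqnn k)); rewrite ca'; apply/eqP; exact: oner_neq0.
      rewrite (bigD1 (Ordinal hk)) //= big1 ?addr0.
        by rewrite coefXn eqxx mul1r.
      move=> j hj; rewrite coefXn; case: eqP => [ej|]; last by rewrite mul0r.
      by exfalso; move/eqP: hj; apply; apply: val_inj.
    have [u' hu'] := nag_unit hnR uca'.
    case: hQ => hQi hQ1 _; apply: hQ1; rewrite -hu'.
    exact: idealMr.
  + move=> [p [v [hp [u hu] hx]]].
    case: hQ => hQi _ _.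
    rewrite (nag_cancel x hu) hx; apply: idealMr => //.
    by apply: (jR_ideal hQi _ hp) => r hr; apply/(ePM r).
- move=> eQ.
  have [b hb] : in_supp i M by apply/(hsupp M hM).
  exists (jS b%:P) => s ns [a ha].
  have nMs : ~ MXd jR M s by move=> /(eQ s).
  have [p [u [hu hsu]]] := nag_rep hnR s.
  have [q [v [hv hav]]] := nag_rep hnR a.
  have np : ~ polyM M p.
    move=> hp; apply: nMs; exists p, u; split => //.
    by case: (nag_unit hnR hu) => w hw; exists w.
  have npv : ~ polyM M (p * v).
    case: (polyM_prime hM) => _ _ hpr.
    by case/hpr => // /(uc_notM hMi _ hv); apply; case: hM.
  have eq : map_poly i (q * u) = map_poly i (p * v) * b%:P.
    apply: (nag_inj hnS); rewrite [RHS]rmorphM -!hcomp !rmorphM -hav -hsu !rmorphM ha; ring.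
  have [k nk] : exists k, ~ M (p * v)`_k.
    by apply: contrapT => hn; apply: npv => k; apply: contrapT => nk; apply: hn; exists k.
  apply: (hb _ nk); exists (q * u)`_k.
  by rewrite -coef_map eq coefMC coef_map.
Qed.
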